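(* Let $(\mathbb R/2\pi\mathbb Z)^3_{\rm reg}=\{(\alpha,\beta,\gamma)\in(\mathbb R/2\pi\mathbb Z)^3:\sin2\beta\neq0\}$. The map $$\Phi:(\mathbb R/2\pi\mathbb Z)^3_{\rm reg}\to\{a\in\mathcal A_2:|a|=1\}\setminus(\mathcal A_1e_2\cup\mathcal A_1),\qquad(\alpha,\beta,\gamma)\mapsto\exp(\alpha e_1)\exp(\beta e_1e_2)\exp(\gamma e_1)$$ is an eight-fold covering map.
   Context: $\mathcal A_2$ is the real associative algebra generated by $e_1,e_2$ with $e_1^2=e_2^2=-1$, $e_1e_2=-e_2e_1$, with Euclidean norm in the basis $1,e_1,e_2,e_1e_2$; $\exp x=\sum_{m\ge0}x^m/m!$. $\mathcal A_1=\mathbb R+\mathbb Re_1$, so $\mathcal A_1e_2=\mathbb Re_2+\mathbb Re_1e_2$. *)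

(* Defs.v *)
From HB Require Import structures.
From mathcomp Require Import all_boot all_order all_algebra generic_quotient.
From mathcomp Require Import all_classical all_reals all_analysis.
Set Implicit Arguments. Unset Strict Implicit. Unset Printing Implicit Defensive.
Import Order.TTheory GRing.Theory Num.Theory.
Import numFieldNormedType.Exports.
Local Open Scope classical_set_scope.
Local Open Scope ring_scope.

(* The algebra A_2 = R<e1,e2>/(e1^2=e2^2=-1, e1e2=-e2e1), realised on  *)
(* R^4 with coordinates in the basis (1, e1, e2, e1e2).                *)
Section A2.
Variable R : realType.

Local Notation A2 := 'rV[R]_4.

Definition mk4 (a b c d : R) : A2 := \row_(i < 4) [:: a; b; c; d]`_i.

Definition c0 (x : A2) : R := x ord0 (@Ordinal 4 0 isT).
Definition c1 (x : A2) : R := x ord0 (@Ordinal 4 1 isT).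
Definition c2 (x : A2) : R := x ord0 (@Ordinal 4 2 isT).
Definition c3 (x : A2) : R := x ord0 (@Ordinal 4 3 isT).

Definition one2 : A2 := mk4 1 0 0 0.
Definition e1 : A2 := mk4 0 1 0 0.
Definition e2 : A2 := mk4 0 0 1 0.
Definition e12 : A2 := mk4 0 0 0 1.

(* Product determined by the relations: e1^2 = e2^2 = (e1e2)^2 = -1,
   e1 e2 = e1e2, e2 (e1e2) = e1, (e1e2) e1 = e2 and anticommutation. *)
Definition mulA (x y : A2) : A2 :=
  let a0 := c0 x in let a1 := c1 x in let a2 := c2 x in let a3 := c3 x in
  let b0 := c0 y in let b1 := c1 y in let b2 := c2 y in let b3 := c3 y in
  mk4 (a0 * b0 - a1 * b1 - a2 * b2 - a3 * b3)
      (a0 * b1 + a1 * b0 + a2 * b3 - a3 * b2)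
      (a0 * b2 - a1 * b3 + a2 * b0 + a3 * b1)
      (a0 * b3 + a1 * b2 - a2 * b1 + a3 * b0).

Fixpoint powA (x : A2) (m : nat) : A2 :=
  if m is m'.+1 then mulA x (powA x m') else one2.

Definition expA (x : A2) : A2 :=
  limn (series (fun m : nat => (m`!%:R)^-1 *: powA x m)).

Definition normA (x : A2) : R :=
  Num.sqrt (c0 x ^+ 2 + c1 x ^+ 2 + c2 x ^+ 2 + c3 x ^+ 2).

Definition A1 : set A2 := [set a | exists x y : R, a = x *: one2 + y *: e1].
Definition A1e2 : set A2 := [set a | exists b, A1 b /\ a = mulA b e2].

Definition target : set A2 :=
  [set a | normA a = 1 /\ ~ (A1e2 a \/ A1 a)].

Definition mod2pi (x y : R) : bool :=
  `[< exists k : int, x - y = k%:~R * (2 * pi) >].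

Lemma mod2pi_refl : reflexive mod2pi.
Proof.
move=> x; apply/asboolP; exists 0; by rewrite subrr mul0r.
Qed.

Lemma mod2pi_sym : symmetric mod2pi.
Proof.
move=> x y; apply/asboolP/asboolP => -[k hk]; exists (- k);
  by rewrite mulrNz mulNr -hk opprB.
Qed.

Lemma mod2pi_trans : transitive mod2pi.
Proof.
move=> y x z /asboolP[k hk] /asboolP[l hl]; apply/asboolP; exists (k + l).
by rewrite mulrzDr mulrDl -hk -hl addrA subrK.
Qed.

Local Open Scope quotient_scope.
Definition mod2pi_equiv := EquivRel mod2pi mod2pi_refl mod2pi_sym mod2pi_trans.

Definition circle : topologicalType :=
  quotient_topology {eq_quot mod2pi_equiv}.

Definition torus3 : topologicalType := (circle * circle * circle)%type.

Definition ang (t : circle) : R := repr t.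

Definition torus_reg : set torus3 :=
  [set t | sin (2 * ang t.1.2) != 0].

(* Phi(alpha, beta, gamma) = exp(alpha e1) exp(beta e1e2) exp(gamma e1),
   computed on representatives (well defined by 2 pi-periodicity). *)
Definition Phi (t : torus3) : A2 :=
  mulA (mulA (expA (ang t.1.1 *: e1)) (expA (ang t.1.2 *: e12)))
       (expA (ang t.2 *: e1)).

End A2.

Definition n_fold_covering (n : nat) (E B : topologicalType) (p : E -> B) : Prop :=
  continuous p /\
  forall b : B, exists U : set B, open U /\ U b /\
    exists V : 'I_n -> set E,
      (forall i, open (V i)) /\
      (forall i j, i != j -> V i `&` V j = set0) /\
      p @^-1` U = \bigcup_i V i /\
      (forall i, exists s : B -> E,
          {within U, continuous s} /\
          (forall y, U y -> V i (s y) /\ p (s y) = y) /\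
          (forall x, V i x -> s (p x) = x)).

(* Main.v *)
From Pilot Require Import Defs.
From HB Require Import structures.
From mathcomp Require Import all_boot all_order all_algebra generic_quotient.
From mathcomp Require Import all_classical all_reals all_analysis.
From mathcomp Require Import ring lra.
Import Order.TTheory GRing.Theory Num.Theory.
Import numFieldNormedType.Exports.
Local Open Scope classical_set_scope.
Local Open Scope ring_scope.


Section Alg.
Variable R : realType.
Local Notation A2 := 'rV[R]_4.
Local Notation mulA := (@Pilot.Defs.mulA R).
Local Notation powA := (@Pilot.Defs.powA R).

Lemma c0_mk4 (a b c d : R) : c0 (mk4 a b c d) = a. Proof. by rewrite /c0 /mk4 mxE. Qed.
Lemma c1_mk4 (a b c d : R) : c1 (mk4 a b c d) = b. Proof. by rewrite /c1 /mk4 mxE. Qed.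
Lemma c2_mk4 (a b c d : R) : c2 (mk4 a b c d) = c. Proof. by rewrite /c2 /mk4 mxE. Qed.
Lemma c3_mk4 (a b c d : R) : c3 (mk4 a b c d) = d. Proof. by rewrite /c3 /mk4 mxE. Qed.

Lemma mk4E (x : A2) : x = mk4 (c0 x) (c1 x) (c2 x) (c3 x).
Proof.
apply/rowP => i; rewrite /mk4 mxE /c0 /c1 /c2 /c3.
case: i => [[|[|[|[|k]]]] Hk] //=; rewrite (ord1 ord0);
  by congr (x _ _); apply: val_inj.
Qed.

Lemma mk4_inj (a b c d a' b' c' d' : R) :
  mk4 a b c d = mk4 a' b' c' d' -> [/\ a = a', b = b', c = c' & d = d'].
Proof.
move=> h; split.
- by rewrite -(c0_mk4 a b c d) h c0_mk4.
- by rewrite -(c1_mk4 a b c d) h c1_mk4.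
- by rewrite -(c2_mk4 a b c d) h c2_mk4.
- by rewrite -(c3_mk4 a b c d) h c3_mk4.
Qed.

Lemma mk4D (a b c d a' b' c' d' : R) :
  mk4 a b c d + mk4 a' b' c' d' = mk4 (a + a') (b + b') (c + c') (d + d').
Proof.
by apply/rowP => i; rewrite !mxE; case: i => [[|[|[|[|k]]]] Hk].
Qed.

Lemma mk4Z (k a b c d : R) : k *: mk4 a b c d = mk4 (k * a) (k * b) (k * c) (k * d).
Proof.
by apply/rowP => i; rewrite !mxE; case: i => [[|[|[|[|n]]]] Hk].
Qed.

Lemma mk40 : mk4 0 0 0 0 = 0 :> A2.
Proof. by apply/rowP => i; rewrite !mxE; case: i => [[|[|[|[|n]]]] Hk]. Qed.

Lemma mulA_mk4 (a0 a1 a2 a3 b0 b1 b2 b3 : R) :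
  mulA (mk4 a0 a1 a2 a3) (mk4 b0 b1 b2 b3) =
  mk4 (a0 * b0 - a1 * b1 - a2 * b2 - a3 * b3)
      (a0 * b1 + a1 * b0 + a2 * b3 - a3 * b2)
      (a0 * b2 - a1 * b3 + a2 * b0 + a3 * b1)
      (a0 * b3 + a1 * b2 - a2 * b1 + a3 * b0).
Proof. by rewrite /mulA !c0_mk4 !c1_mk4 !c2_mk4 !c3_mk4. Qed.


Definition Cm (a : R) (m : nat) : R := (~~ odd m)%:R * (-1) ^+ m./2 * a ^+ m.
Definition Sm (a : R) (m : nat) : R := (odd m)%:R * (-1) ^+ m.-1./2 * a ^+ m.

Lemma CmS a m : Cm a m.+1 = - (a * Sm a m).
Proof.
rewrite /Cm /Sm /=; case: (boolP (odd m)) => om /=; last by rewrite !mul0r mulr0 oppr0.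
have -> : m = (m./2).*2.+1 by rewrite -[in LHS](odd_double_half m) om.
move: (m./2) => k /=.
idtac.
rewrite (half_bit_double k false) exprS [a ^+ _.+2]exprS; ring.
Qed.

Lemma SmS a m : Sm a m.+1 = a * Cm a m.
Proof. by rewrite /Cm /Sm /= exprS; ring. Qed.

Lemma powA_e1 a m : powA (a *: e1 R) m = mk4 (Cm a m) (Sm a m) 0 0.
Proof.
elim: m => [|m IH] /=.
  by rewrite /one2 /Cm /Sm /=; congr mk4; rewrite ?expr0 ?mul1r ?mul0r ?mulr1.
rewrite IH /e1 mk4Z mulA_mk4 CmS SmS; congr mk4; ring.
Qed.

Lemma powA_e12 a m : powA (a *: e12 R) m = mk4 (Cm a m) 0 0 (Sm a m).
Proof.
elim: m => [|m IH] /=.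
  by rewrite /one2 /Cm /Sm /=; congr mk4; rewrite ?expr0 ?mul1r ?mul0r ?mulr1.
rewrite IH /e12 mk4Z mulA_mk4 CmS SmS; congr mk4; ring.
Qed.

Lemma cos_coeffCm a m : cos_coeff a m = (m`!%:R)^-1 * Cm a m.
Proof. by rewrite /cos_coeff /Cm /= -exprnP; ring. Qed.
Lemma sin_coeffSm a m : sin_coeff a m = (m`!%:R)^-1 * Sm a m.
Proof. by rewrite /sin_coeff /Sm /=; ring. Qed.

Lemma series_vec (f g : R ^nat) (v w : A2) n :
  @series A2 (fun m => f m *: v + g m *: w) n = series f n *: v + series g n *: w.
Proof.
rewrite /series /= big_split /= -!scaler_suml //.
Qed.

Lemma cvg_cos_series (a : R) : series (cos_coeff a) @ \oo --> cos a.
Proof. by rewrite unlock; exact: is_cvg_series_cos_coeff. Qed.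
Lemma cvg_sin_series (a : R) : series (sin_coeff a) @ \oo --> sin a.
Proof. by rewrite unlock; exact: is_cvg_series_sin_coeff. Qed.

Lemma expA_gen (u : A2) (F : R -> nat -> A2) a :
  (forall m, F a m = cos_coeff a m *: one2 R + sin_coeff a m *: u) ->
  limn (series (F a)) = cos a *: one2 R + sin a *: u.
Proof.
move=> HF; apply: cvg_lim => //.
have -> : series (F a) = (fun n => series (cos_coeff a) n *: one2 R + series (sin_coeff a) n *: u).
  by apply/funext => n; rewrite -series_vec; congr (series _ n); apply/funext => m.
apply: cvgD; apply: cvgZl; [exact: cvg_cos_series | exact: cvg_sin_series].
Qed.

Lemma expA_e1 a : expA (a *: e1 R) = mk4 (cos a) (sin a) 0 0.
Proof.
rewrite /expA (@expA_gen (e1 R) (fun a m => (m`!%:R)^-1 *: powA (a *: e1 R) m) a).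
  by rewrite /one2 /e1 !mk4Z mk4D; congr mk4; ring.
move=> m; rewrite powA_e1 cos_coeffCm sin_coeffSm /one2 /e1 !mk4Z mk4D; congr mk4; ring.
Qed.

Lemma expA_e12 a : expA (a *: e12 R) = mk4 (cos a) 0 0 (sin a).
Proof.
rewrite /expA (@expA_gen (e12 R) (fun a m => (m`!%:R)^-1 *: powA (a *: e12 R) m) a).
  by rewrite /one2 /e12 !mk4Z mk4D; congr mk4; ring.
move=> m; rewrite powA_e12 cos_coeffCm sin_coeffSm /one2 /e12 !mk4Z mk4D; congr mk4; ring.
Qed.

End Alg.


Local Open Scope quotient_scope.

Section Circ.
Variable R : realType.
Local Notation pi := (@pi R).
Local Notation piC := (\pi_(circle R)).

Lemma cos2pi' : cos (2 * pi) = 1.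
Proof. by rewrite mulrC mulr_natr cos2pi. Qed.
Lemma sin2pi' : sin (2 * pi) = 0.
Proof. by rewrite mulrC mulr_natr sin2pi. Qed.

Lemma cs_nat (n : nat) : cos (n%:R * (2 * pi)) = 1 /\ sin (n%:R * (2 * pi)) = 0.
Proof.
elim: n => [|n [IHc IHs]]; first by rewrite mul0r cos0 sin0.
rewrite -addn1 natrD mulrDl mul1r cosD sinD IHc IHs cos2pi' sin2pi'.
split; ring.
Qed.

Lemma cs_int (k : int) : cos (k%:~R * (2 * pi)) = 1 /\ sin (k%:~R * (2 * pi)) = 0.
Proof.
case: k => n; first exact: cs_nat.
rewrite NegzE mulrNz mulNr cosN sinN; have [-> ->] := cs_nat n.+1; split => //.
by rewrite oppr0.
Qed.

Lemma mod2pi_cs {x y : R} : mod2pi x y -> cos x = cos y /\ sin x = sin y.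
Proof.
move=> /asboolP [k hk]; have -> : x = y + k%:~R * (2 * pi) by rewrite -hk; ring.
by rewrite cosD sinD; have [-> ->] := cs_int k; split; ring.
Qed.

Lemma ang_mod (x : R) : mod2pi (ang (piC x)) x.
Proof. by apply/(eqmodP (mod2pi_equiv R)); rewrite reprK. Qed.

Lemma cos_ang (x : R) : cos (ang (piC x)) = cos x.
Proof. exact: proj1 (mod2pi_cs (ang_mod x)). Qed.
Lemma sin_ang (x : R) : sin (ang (piC x)) = sin x.
Proof. exact: proj2 (mod2pi_cs (ang_mod x)). Qed.

Lemma cos_eq1 (t : R) : cos t = 1 -> exists k : int, t = k%:~R * (2 * pi).
Proof.
move=> ct; have pi0 := pi_gt0 R.
have p0 : 0 < 2 * pi by rewrite mulr_gt0.
set k := Num.floor (t / (2 * pi)).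
exists k.
have := floor_itv (t / (2 * pi)); rewrite -/k => /andP [h1 h2].
set r := t - k%:~R * (2 * pi).
have h1' : k%:~R * (2 * pi) <= t by rewrite -ler_pdivlMr.
have h2' : t < (k + 1)%:~R * (2 * pi) by rewrite -ltr_pdivrMr.
rewrite intrD mulrDl mul1r in h2'.
have r0 : 0 <= r by rewrite /r; lra.
have r2 : r < 2 * pi by rewrite /r; lra.
have cr : cos r = 1.
  rewrite /r cosB; have [-> ->] := cs_int k; rewrite ct; ring.
suff : r = 0 by rewrite /r => /eqP; rewrite subr_eq0 => /eqP.
have [rp|rp] := leP r pi.
  apply: (@cos_inj R); rewrite ?in_itv /= ?r0 ?rp ?lexx ?pi_ge0 // cos0 //.
exfalso; have s0 : 2 * pi - r = 0.
  apply: (@cos_inj R); rewrite ?in_itv /= ?lexx ?pi_ge0 ?cos0 //.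
  - by apply/andP; split; lra.
  - by rewrite cosB cos2pi' sin2pi' cr; ring.
lra.
Qed.

Lemma piC_eq (x y : R) : cos x = cos y -> sin x = sin y -> piC x = piC y.
Proof.
move=> hc hs; apply/(eqmodP (mod2pi_equiv R))/asboolP.
have : cos (x - y) = 1 by rewrite cosB hc hs -!expr2 cos2Dsin2.
by move/cos_eq1.
Qed.

Lemma piC_eq_mod (x y : R) : piC x = piC y -> mod2pi x y.
Proof. by move/(eqmodP (mod2pi_equiv R)). Qed.

Lemma cos_ang_cont : continuous (fun t : circle R => cos (ang t)).
Proof.
apply: (@repr_comp_continuous _ _ _ (@cos R)); first exact: continuous_cos.
by move=> a b /eqP/piC_eq_mod/mod2pi_cs [-> _].
Qed.

Lemma sin_ang_cont : continuous (fun t : circle R => sin (ang t)).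
Proof.
apply: (@repr_comp_continuous _ _ _ (@sin R)); first exact: continuous_sin.
by move=> a b /eqP/piC_eq_mod/mod2pi_cs [_ ->].
Qed.

End Circ.


Local Open Scope quotient_scope.

Section PhiSec.
Variable R : realType.
Local Notation pi := (@pi R).
Local Notation piC := (\pi_(circle R)).
Local Notation A2 := 'rV[R]_4.
Local Notation mulA := (@Pilot.Defs.mulA R).

Definition PhiFm (a b g : R) : A2 :=
  mk4 (cos b * cos (a + g)) (cos b * sin (a + g))
      (- (sin b * sin (a - g))) (sin b * cos (a - g)).

Lemma Phi_closed (t : torus3 R) : Phi t = PhiFm (ang t.1.1) (ang t.1.2) (ang t.2).
Proof.
rewrite /Phi !expA_e1 expA_e12 !mulA_mk4 /PhiFm cosD sinD cosB sinB.
congr mk4; ring.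
Qed.

Lemma sin2 (b : R) : sin (2 * b) = 2 * (sin b * cos b).
Proof. by rewrite mulrC mulr_natr sin_mulr2n mulr_natl mulrC. Qed.

Lemma normA_PhiF a b g : normA (PhiFm a b g) = 1.
Proof.
rewrite /normA /PhiFm c0_mk4 c1_mk4 c2_mk4 c3_mk4.
have h : forall x : R, cos x ^+ 2 + sin x ^+ 2 = 1 := @cos2Dsin2 R.
set ca := cos (a + g); set sa := sin (a + g); set cb := cos (a - g); set sb := sin (a - g).
have e : (cos b * ca) ^+ 2 + (cos b * sa) ^+ 2 + (- (sin b * sb)) ^+ 2 + (sin b * cb) ^+ 2
  = cos b ^+ 2 * (ca ^+ 2 + sa ^+ 2) + sin b ^+ 2 * (cb ^+ 2 + sb ^+ 2) by ring.
by rewrite e h h mulr1 mulr1 h sqrtr1.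
Qed.

Lemma A1_mk4 (v : A2) : A1 v -> c2 v = 0 /\ c3 v = 0.
Proof.
move=> [x [y ->]]; rewrite /one2 /e1 !mk4Z mk4D c2_mk4 c3_mk4; split; ring.
Qed.

Lemma A1e2_mk4 (v : A2) : A1e2 v -> c0 v = 0 /\ c1 v = 0.
Proof.
move=> [w [[x [y ->]] ->]]; rewrite /one2 /e1 /e2 !mk4Z mk4D mulA_mk4 c0_mk4 c1_mk4; split; ring.
Qed.

Lemma PhiF_target a b g : sin (2 * b) != 0 -> target (PhiFm a b g).
Proof.
rewrite sin2 => hb; split; first exact: normA_PhiF.
have hc : cos b != 0 by apply: contra hb => /eqP ->; rewrite !mulr0.
have hs : sin b != 0 by apply: contra hb => /eqP ->; rewrite !mul0r mulr0.
have h : forall x : R, cos x ^+ 2 + sin x ^+ 2 = 1 := @cos2Dsin2 R.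
case=> [/A1e2_mk4|/A1_mk4]; rewrite /PhiFm ?c0_mk4 ?c1_mk4 ?c2_mk4 ?c3_mk4 => -[e1 e2].
  have : cos b ^+ 2 * (cos (a + g) ^+ 2 + sin (a + g) ^+ 2) = 0.
    by rewrite mulrDr -!exprMn e1 e2 expr0n /= addr0.
  by rewrite h mulr1 => /eqP; rewrite expf_eq0 /= (negbTE hc).
have : sin b ^+ 2 * (cos (a - g) ^+ 2 + sin (a - g) ^+ 2) = 0.
  have e3 : sin b * sin (a - g) = 0 by rewrite -[LHS]opprK e1 oppr0.
  by rewrite mulrDr -!exprMn e3 e2 expr0n /= addr0.
by rewrite h mulr1 => /eqP; rewrite expf_eq0 /= (negbTE hs).
Qed.

Lemma Phi_target (t : torus3 R) : torus_reg t -> target (Phi t).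
Proof. by rewrite Phi_closed => h; apply: PhiF_target. Qed.

End PhiSec.


Local Open Scope quotient_scope.

Section Cont.
Variable R : realType.
Local Notation pi := (@pi R).
Local Notation piC := (\pi_(circle R)).
Local Notation A2 := 'rV[R]_4.

Section gen.
Context {X : topologicalType}.
Implicit Types f g : X -> R.

Lemma cD f g x : {for x, continuous f} -> {for x, continuous g} ->
  {for x, continuous (fun t => f t + g t)}.
Proof. exact: continuousD. Qed.
Lemma cB f g x : {for x, continuous f} -> {for x, continuous g} ->
  {for x, continuous (fun t => f t - g t)}.
Proof. by move=> hf hg; apply: continuousD => //; apply: continuousN. Qed.
Lemma cM f g x : {for x, continuous f} -> {for x, continuous g} ->
  {for x, continuous (fun t => f t * g t)}.
Proof. exact: continuousM. Qed.
Lemma cN f x : {for x, continuous f} -> {for x, continuous (fun t => - f t)}.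
Proof. exact: continuousN. Qed.
Lemma cV f x : f x != 0 -> {for x, continuous f} -> {for x, continuous (fun t => (f t)^-1)}.
Proof. exact: continuousV. Qed.
Lemma cC (c : R) x : {for x, continuous (fun _ : X => c)}.
Proof. exact: cvg_cst. Qed.
Lemma cComp f (h : R -> R) x : {for x, continuous f} -> {for f x, continuous h} ->
  {for x, continuous (fun t => h (f t))}.
Proof. by move=> hf hh; apply: (continuous_comp hf hh). Qed.

Lemma cmk4 (f0 f1 f2 f3 : X -> R) x :
  {for x, continuous f0} -> {for x, continuous f1} ->
  {for x, continuous f2} -> {for x, continuous f3} ->
  {for x, continuous (fun t => mk4 (f0 t) (f1 t) (f2 t) (f3 t))}.
Proof.
move=> h0 h1 h2 h3.
have -> : (fun t => mk4 (f0 t) (f1 t) (f2 t) (f3 t)) =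
  (fun t => f0 t *: one2 R + f1 t *: e1 R + f2 t *: e2 R + f3 t *: e12 R).
  apply/funext => t; rewrite /one2 /e1 /e2 /e12 !mk4Z !mk4D; congr mk4; ring.
apply: continuousD; [apply: continuousD; [apply: continuousD|]|];
  by apply: cvgZl.
Qed.
End gen.

Lemma settype_cont_at {X T : topologicalType} (A : set T) (g : X -> set_type A) x :
  {for x, continuous (fun t => set_val (g t))} -> {for x, continuous g}.
Proof.
move=> hc S; rewrite nbhsE; move=> -[Op [oOp Opx OpS]].
case: oOp => B oB eB.
have Bn : nbhs (set_val (g x)) B.
  by apply: open_nbhs_nbhs; split => //; move: Opx; rewrite -eB.
have := hc B Bn; rewrite nbhs_simpl /=.
apply: filterS => y /= By; apply: OpS; rewrite -eB; exact: By.
Qed.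

Lemma cont_fst_fst : continuous (fun t : torus3 R => t.1.1).
Proof.
move=> t; apply: (@continuous_comp _ _ _ fst fst); exact: cvg_fst.
Qed.
Lemma cont_fst_snd : continuous (fun t : torus3 R => t.1.2).
Proof.
move=> t; apply: (@continuous_comp _ _ _ fst snd); [exact: cvg_fst| exact: cvg_snd].
Qed.
Lemma cont_snd : continuous (fun t : torus3 R => t.2).
Proof. move=> t; exact: cvg_snd. Qed.

End Cont.


Local Open Scope quotient_scope.

Section PhiReg.
Variable R : realType.
Local Notation pi := (@pi R).
Local Notation piC := (\pi_(circle R)).
Local Notation A2 := 'rV[R]_4.

Definition ca (t : torus3 R) := cos (ang t.1.1).
Definition sa (t : torus3 R) := sin (ang t.1.1).
Definition cb (t : torus3 R) := cos (ang t.1.2).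
Definition sb (t : torus3 R) := sin (ang t.1.2).
Definition cg (t : torus3 R) := cos (ang t.2).
Definition sg (t : torus3 R) := sin (ang t.2).

Lemma ca_cont : continuous ca.
Proof. move=> t; exact: (@continuous_comp _ _ _ (fun t : torus3 R => t.1.1) (fun a : circle R => cos (ang a)) t (@cont_fst_fst R t) (@cos_ang_cont R _)). Qed.
Lemma sa_cont : continuous sa.
Proof. move=> t; exact: (@continuous_comp _ _ _ (fun t : torus3 R => t.1.1) (fun a : circle R => sin (ang a)) t (@cont_fst_fst R t) (@sin_ang_cont R _)). Qed.
Lemma cb_cont : continuous cb.
Proof. move=> t; exact: (@continuous_comp _ _ _ (fun t : torus3 R => t.1.2) (fun a : circle R => cos (ang a)) t (@cont_fst_snd R t) (@cos_ang_cont R _)). Qed.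
Lemma sb_cont : continuous sb.
Proof. move=> t; exact: (@continuous_comp _ _ _ (fun t : torus3 R => t.1.2) (fun a : circle R => sin (ang a)) t (@cont_fst_snd R t) (@sin_ang_cont R _)). Qed.
Lemma cg_cont : continuous cg.
Proof. move=> t; exact: (@continuous_comp _ _ _ (fun t : torus3 R => t.2) (fun a : circle R => cos (ang a)) t (@cont_snd R t) (@cos_ang_cont R _)). Qed.
Lemma sg_cont : continuous sg.
Proof. move=> t; exact: (@continuous_comp _ _ _ (fun t : torus3 R => t.2) (fun a : circle R => sin (ang a)) t (@cont_snd R t) (@sin_ang_cont R _)). Qed.

Lemma Phi_prod (t : torus3 R) : Phi t =
  mk4 (cb t * (ca t * cg t - sa t * sg t)) (cb t * (sa t * cg t + ca t * sg t))
      (- (sb t * (sa t * cg t - ca t * sg t))) (sb t * (ca t * cg t + sa t * sg t)).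
Proof. by rewrite Phi_closed /PhiFm cosD sinD cosB sinB. Qed.

Lemma Phi_cont : continuous (@Phi R).
Proof.
have -> : @Phi R = fun t => mk4 (cb t * (ca t * cg t - sa t * sg t)) (cb t * (sa t * cg t + ca t * sg t))
      (- (sb t * (sa t * cg t - ca t * sg t))) (sb t * (ca t * cg t + sa t * sg t)).
  by apply/funext => t; rewrite Phi_prod.
move=> t.
apply: (@cmk4 R (torus3 R)); repeat (first [apply: cM | apply: cD | apply: cB | apply: cN | exact: ca_cont | exact: sa_cont | exact: cb_cont | exact: sb_cont | exact: cg_cont | exact: sg_cont]).
Qed.

Definition Phi_reg (t : set_type (@torus_reg R)) : set_type (@target R) :=
  @exist _ _ (Phi (set_val t)) (mem_set (@Phi_target R _ (set_valP t))).

Lemma Phi_regE t : \val (Phi_reg t) = Phi (\val t).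
Proof. by []. Qed.

Lemma Phi_reg_cont : continuous Phi_reg.
Proof.
move=> t; apply: settype_cont_at => /=.
apply: (continuous_comp _ (Phi_cont _)).
exact: initial_continuous.
Qed.

End PhiReg.


Local Open Scope quotient_scope.

Section Geo.
Context {R : realType}.
Local Notation pi := (@pi R).

Definition argc (th x y : R) : R :=
  th + atan ((cos th * y - sin th * x) / (cos th * x + sin th * y)).

Lemma argc_cs th x y : 0 < cos th * x + sin th * y ->
  cos (argc th x y) * Num.sqrt (x ^+ 2 + y ^+ 2) = x /\
  sin (argc th x y) * Num.sqrt (x ^+ 2 + y ^+ 2) = y.
Proof.
set p := cos th * x + sin th * y; set d := cos th * y - sin th * x => p0.
have cs : cos th ^+ 2 + sin th ^+ 2 = 1 := cos2Dsin2 th.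
set r := Num.sqrt (x ^+ 2 + y ^+ 2).
have e2 : p ^+ 2 + d ^+ 2 = x ^+ 2 + y ^+ 2.
  have -> : p ^+ 2 + d ^+ 2 = (cos th ^+ 2 + sin th ^+ 2) * (x ^+ 2 + y ^+ 2) by rewrite /p /d; ring.
  by rewrite cs mul1r.
have s0 : 0 <= x ^+ 2 + y ^+ 2 by rewrite addr_ge0 // sqr_ge0.
have rr : r ^+ 2 = x ^+ 2 + y ^+ 2 by rewrite sqr_sqrtr.
have r0 : 0 < r.
  rewrite sqrtr_gt0 -e2; apply: ltr_wpDr; first exact: sqr_ge0.
  by rewrite exprn_gt0.
have pn0 : p != 0 by rewrite gt_eqF.
have rn0 : r != 0 by rewrite gt_eqF.
have hs : Num.sqrt (1 + (d / p) ^+ 2) = r / p.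
  have -> : 1 + (d / p) ^+ 2 = (r / p) ^+ 2.
    by rewrite !expr_div_n rr -e2; field.
  by rewrite sqrtr_sqr ger0_norm // divr_ge0 // ltW.
have hc : cos (atan (d / p)) = p / r by rewrite cos_atan hs invf_div.
have hsn : sin (atan (d / p)) = d / r.
  have ct : cos (atan (d / p)) != 0 by rewrite hc mulf_neq0 // invr_eq0.
  have := atanK (d / p); rewrite /tan => h.
  have -> : sin (atan (d / p)) = sin (atan (d / p)) / cos (atan (d / p)) * cos (atan (d / p)).
    by rewrite divfK.
  by rewrite h hc mulrA divfK.
rewrite /argc -/p -/d cosD sinD hc hsn; split.
  have -> : (cos th * (p / r) - sin th * (d / r)) * r = (cos th ^+ 2 + sin th ^+ 2) * x.
    by rewrite /p /d; field.
  by rewrite cs mul1r.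
have -> : (sin th * (p / r) + cos th * (d / r)) * r = (cos th ^+ 2 + sin th ^+ 2) * y.
  by rewrite /p /d; field.
by rewrite cs mul1r.
Qed.

Lemma exists_chart (x y : R) : ~ (x = 0 /\ y = 0) -> exists th, 0 < cos th * x + sin th * y.
Proof.
move=> nz.
have [xp|xn|x0] := ltgtP 0 x.
- by exists 0; rewrite cos0 sin0 mul1r mul0r addr0.
- by exists pi; rewrite cospi sinpi mul0r addr0 mulN1r oppr_gt0.
have [yp|yn|y0] := ltgtP 0 y.
- by exists (pi / 2); rewrite cos_pihalf sin_pihalf mul0r add0r mul1r.
- by exists (- (pi / 2)); rewrite cosN sinN cos_pihalf sin_pihalf mul0r add0r mulN1r oppr_gt0.
by exfalso; apply: nz.
Qed.

Definition pib (b : bool) : R := if b then pi else 0.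
Definition sgb (b : bool) : R := if b then -1 else 1.

Lemma cos_pib x b : cos (x + pib b) = sgb b * cos x.
Proof. by case: b; rewrite /pib /sgb ?addr0 ?mul1r // cosDpi mulN1r. Qed.
Lemma sin_pib x b : sin (x + pib b) = sgb b * sin x.
Proof. by case: b; rewrite /pib /sgb ?addr0 ?mul1r // sinDpi mulN1r. Qed.
Lemma sgb2 b : sgb b * sgb b = 1.
Proof. by case: b; rewrite /sgb ?mulN1r ?opprK ?mul1r. Qed.
Lemma cos_2pib b : cos (2 * pib b) = 1 /\ sin (2 * pib b) = 0.
Proof.
case: b; rewrite /pib ?mulr0 ?cos0 ?sin0 //.
by rewrite mulrC mulr_natr cos2pi sin2pi.
Qed.

Definition eqv (x y : R) := cos x = cos y /\ sin x = sin y.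

Lemma eqvD {x y x' y' : R} : eqv x x' -> eqv y y' -> eqv (x + y) (x' + y').
Proof. by move=> [h1 h2] [h3 h4]; rewrite /eqv cosD sinD cosD sinD h1 h2 h3 h4. Qed.
Lemma eqvN {x y : R} : eqv x y -> eqv (- x) (- y).
Proof. by move=> [h1 h2]; rewrite /eqv cosN sinN cosN sinN h1 h2. Qed.
Lemma eqvB {x y x' y' : R} : eqv x x' -> eqv y y' -> eqv (x - y) (x' - y').
Proof. by move=> h1 h2; apply: eqvD => //; apply: eqvN. Qed.
Lemma eqv_refl x : eqv x x. Proof. by []. Qed.
Lemma eqv_sym {x y : R} : eqv x y -> eqv y x. Proof. by rewrite /eqv => -[-> ->]. Qed.
Lemma eqv_trans {x y z : R} : eqv x y -> eqv y z -> eqv x z.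
Proof. by rewrite /eqv => -[-> ->]. Qed.
Lemma eqv0 x : cos x = 1 -> eqv x 0.
Proof.
move=> h; split; rewrite ?cos0 ?sin0 //.
have := cos2Dsin2 x; rewrite h expr1n => /eqP; rewrite -subr_eq0 addrC addKr.
by rewrite sqrf_eq0 => /eqP.
Qed.
Lemma eqv_sub {x y : R} : eqv x y -> eqv (x - y) 0.
Proof. by move=> h; rewrite -(subrr y); apply: eqvB. Qed.
Lemma eqv_of_sub {x y : R} : eqv (x - y) 0 -> eqv x y.
Proof. by move=> h; have := eqvD h (eqv_refl y); rewrite subrK add0r. Qed.

End Geo.


Local Open Scope quotient_scope.

Section Fib.
Context {R : realType}.
Local Notation pi := (@pi R).
Local Notation A2 := 'rV[R]_4.
Local Notation PhiF := (@PhiFm R).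
Implicit Types v : A2.

Definition rz v : R := Num.sqrt (c0 v ^+ 2 + c1 v ^+ 2).
Definition rw v : R := Num.sqrt (c2 v ^+ 2 + c3 v ^+ 2).

Lemma sum_sq0 {x y : R} : x ^+ 2 + y ^+ 2 = 0 -> x = 0 /\ y = 0.
Proof.
move=> h; have hx : x ^+ 2 = 0.
  by have := sqr_ge0 x; have := sqr_ge0 y; lra.
have hy : y ^+ 2 = 0 by rewrite hx add0r in h.
by split; apply/eqP; rewrite -sqrf_eq0; apply/eqP.
Qed.

Lemma target_facts v : target v ->
  [/\ 0 < rz v, 0 < rw v & rz v ^+ 2 + rw v ^+ 2 = 1].
Proof.
move=> [hn hA].
have s1 : 0 <= c0 v ^+ 2 + c1 v ^+ 2 by rewrite addr_ge0 // sqr_ge0.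
have s2 : 0 <= c2 v ^+ 2 + c3 v ^+ 2 by rewrite addr_ge0 // sqr_ge0.
split.
- rewrite sqrtr_gt0 lt_def s1 andbT; apply/negP => /eqP/sum_sq0 -[h0 h1].
  apply: hA; left; exists ((c2 v) *: one2 R + (c3 v) *: e1 R); split.
    by exists (c2 v), (c3 v).
  rewrite /one2 /e1 /e2 !mk4Z mk4D mulA_mk4 {1}(mk4E _ v) h0 h1; congr mk4; ring.
- rewrite sqrtr_gt0 lt_def s2 andbT; apply/negP => /eqP/sum_sq0 -[h2 h3].
  apply: hA; right; exists (c0 v), (c1 v).
  rewrite /one2 /e1 !mk4Z mk4D {1}(mk4E _ v) h2 h3; congr mk4; ring.
- rewrite /rz /rw !sqr_sqrtr //.
  have s : 0 <= c0 v ^+ 2 + c1 v ^+ 2 + c2 v ^+ 2 + c3 v ^+ 2 by rewrite !addr_ge0 // sqr_ge0.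
  move: hn; rewrite /normA => /(congr1 (fun z => z ^+ 2)); rewrite sqr_sqrtr // expr1n.
  by move=> <-; ring.
Qed.

Definition beta0 v : R := argc 0 (rz v) (rw v).
Definition bet (b1 b2 : bool) v : R := pib b1 + sgb (b1 (+) b2) * beta0 v.

Lemma beta0_cs {v} : target v -> cos (beta0 v) = rz v /\ sin (beta0 v) = rw v.
Proof.
move=> /target_facts [h1 h2 h3].
have := @argc_cs R 0 (rz v) (rw v); rewrite cos0 sin0 mul1r mul0r addr0 h3 sqrtr1 !mulr1.
by move/(_ h1).
Qed.

Lemma bet_cs b1 b2 {v} : target v ->
  cos (bet b1 b2 v) = sgb b1 * rz v /\ sin (bet b1 b2 v) = sgb b2 * rw v.
Proof.
move=> /beta0_cs [hc hs]; rewrite /bet addrC cos_pib sin_pib.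
by case: b1; case: b2; rewrite /sgb /= ?mul1r ?mulN1r ?cosN ?sinN hc hs ?opprK.
Qed.

Definition pz (th : R) v : R := cos th * c0 v + sin th * c1 v.
Definition pw (th : R) v : R := cos th * c3 v + sin th * (- c2 v).
Definition Az (th : R) v : R := argc th (c0 v) (c1 v).
Definition Bw (th : R) v : R := argc th (c3 v) (- c2 v).

Lemma Az_cs {th v} : 0 < pz th v -> cos (Az th v) * rz v = c0 v /\ sin (Az th v) * rz v = c1 v.
Proof. exact: argc_cs. Qed.
Lemma Bw_cs {th v} : 0 < pw th v -> cos (Bw th v) * rw v = c3 v /\ sin (Bw th v) * rw v = - c2 v.
Proof.
move=> h; have -> : rw v = Num.sqrt (c3 v ^+ 2 + (- c2 v) ^+ 2) by rewrite /rw sqrrN addrC.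
exact: argc_cs.
Qed.

Section lab.
Variables (thz thw : R) (b1 b2 e : bool).
Definition Au v : R := Az thz v + pib b1.
Definition Bu v : R := Bw thw v + pib b2.
Definition hh v : R := (Au v + Bu v) / 2.
Definition al v : R := hh v + pib e.
Definition ga v : R := (Au v - Bu v) / 2 + pib e.

Lemma alga_sum v : al v + ga v = Au v + 2 * pib e.
Proof. by rewrite /al /ga /hh; field. Qed.
Lemma alga_diff v : al v - ga v = Bu v.
Proof. by rewrite /al /ga /hh; field. Qed.

Lemma sec_PhiF v : target v -> 0 < pz thz v -> 0 < pw thw v ->
  PhiF (al v) (bet b1 b2 v) (ga v) = v.
Proof.
move=> tv hz hw; have [hbc hbs] := bet_cs b1 b2 tv.
have [ac as_] := Az_cs hz; have [bc bs] := Bw_cs hw.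
have [c2e s2e] := @cos_2pib R e.
rewrite /PhiFm alga_sum alga_diff cosD sinD c2e s2e /Au /Bu cos_pib sin_pib cos_pib sin_pib hbc hbs.
rewrite [RHS](mk4E _ v) -ac -as_ -bc.
have -> : c2 v = - (sin (Bw thw v) * rw v) by rewrite bs opprK.
congr mk4.
- by rewrite mulr1 mulr0 subr0 -[RHS]mul1r -(sgb2 b1); ring.
- by rewrite mulr1 mulr0 addr0 -[RHS]mul1r -(sgb2 b1); ring.
- by rewrite -[RHS]mul1r -(sgb2 b2); ring.
- by rewrite -[RHS]mul1r -(sgb2 b2); ring.
Qed.
End lab.

End Fib.


Local Open Scope quotient_scope.

Section Fib2.
Context {R : realType}.
Local Notation pi := (@pi R).
Local Notation A2 := 'rV[R]_4.
Local Notation PhiF := (@PhiFm R).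
Implicit Types v : A2.

Lemma sign_sq (b : bool) (c r : R) : 0 < sgb b * c -> c ^+ 2 = r ^+ 2 -> 0 < r -> c = sgb b * r.
Proof.
case: b; rewrite /sgb ?mul1r ?mulN1r => hc hcr hr.
- have : (c - r) * (c + r) = 0 by rewrite -subr_sqr hcr subrr.
  move/eqP; rewrite mulf_eq0 => /orP [/eqP h|/eqP h]; lra.
- have : (c - r) * (c + r) = 0 by rewrite -subr_sqr hcr subrr.
  move/eqP; rewrite mulf_eq0 => /orP [/eqP h|/eqP h]; lra.
Qed.

Lemma canc_s {b : bool} {c A r : R} : r != 0 -> sgb b * r * c = A * r -> c = sgb b * A.
Proof. by case: b; rewrite /sgb => rn h; apply: (mulIf rn); lra. Qed.

Lemma cos_pibB (x : R) b : cos (x - pib b) = sgb b * cos x.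
Proof. by case: b; rewrite /pib /sgb ?subr0 ?mul1r // cosB cospi sinpi; ring. Qed.

Variables (thz thw : R) (b1 b2 : bool).
Variables (a b g : R) (v : A2).
Hypothesis hP : PhiF a b g = v.
Hypothesis tv : target v.
Hypothesis hz : 0 < pz thz v.
Hypothesis hw : 0 < pw thw v.
Hypothesis s1 : 0 < sgb b1 * cos b.
Hypothesis s2 : 0 < sgb b2 * sin b.

Let E : [/\ cos b * cos (a + g) = c0 v, cos b * sin (a + g) = c1 v,
  - (sin b * sin (a - g)) = c2 v & sin b * cos (a - g) = c3 v].
Proof. by rewrite -hP /PhiFm c0_mk4 c1_mk4 c2_mk4 c3_mk4. Qed.

Lemma fib_cb : cos b = sgb b1 * rz v.
Proof.
have [E0 E1 _ _] := E; have [r0 _ _] := target_facts _ tv.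
apply: sign_sq => //; rewrite /rz sqr_sqrtr ?addr_ge0 ?sqr_ge0 // -E0 -E1.
have := cos2Dsin2 (a + g) => h.
by rewrite !exprMn -mulrDr h mulr1.
Qed.

Lemma fib_sb : sin b = sgb b2 * rw v.
Proof.
have [_ _ E2 E3] := E; have [_ r0 _] := target_facts _ tv.
apply: sign_sq => //; rewrite /rw sqr_sqrtr ?addr_ge0 ?sqr_ge0 // -E2 -E3.
have := cos2Dsin2 (a - g) => h.
by rewrite sqrrN !exprMn -mulrDr addrC h mulr1.
Qed.

Lemma fib_b : eqv b (bet b1 b2 v).
Proof.
by have [hc hs] := bet_cs b1 b2 tv; rewrite /eqv hc hs fib_cb fib_sb.
Qed.

Lemma fib_u : eqv (a + g) (Au thz b1 v).
Proof.
have [E0 E1 _ _] := E; have [r0 _ _] := target_facts _ tv.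
have [ac as_] := Az_cs hz.
have rn : rz v != 0 by rewrite gt_eqF.
rewrite /eqv /Au cos_pib sin_pib; split; apply: (canc_s rn).
  by rewrite -fib_cb E0 ac.
by rewrite -fib_cb E1 as_.
Qed.

Lemma fib_v : eqv (a - g) (Bu thw b2 v).
Proof.
have [_ _ E2 E3] := E; have [_ r0 _] := target_facts _ tv.
have [bc bs] := Bw_cs hw.
have rn : rw v != 0 by rewrite gt_eqF.
rewrite /eqv /Bu cos_pib sin_pib; split; apply: (canc_s rn).
  by rewrite -fib_sb E3 bc.
by rewrite -fib_sb bs -E2 opprK.
Qed.

Lemma fib_h2 : cos (a - hh thz thw b1 b2 v) ^+ 2 = 1.
Proof.
set d := a - hh thz thw b1 b2 v.
have e2 : eqv (d *+ 2) 0.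
  have -> : d *+ 2 = (a + g - Au thz b1 v) + (a - g - Bu thw b2 v).
    by rewrite /d /hh; field.
  by rewrite -(addr0 0); apply: eqvD; apply: eqv_sub; [exact: fib_u | exact: fib_v].
move: e2 => [+ _]; rewrite cos_mulr2n cos0 => h.
by move: h; lra.
Qed.

Lemma fib_a e : 0 < sgb e * cos (a - hh thz thw b1 b2 v) -> eqv a (al thz thw b1 b2 e v).
Proof.
move=> he; apply: eqv_of_sub; apply: eqv0.
have -> : a - al thz thw b1 b2 e v = (a - hh thz thw b1 b2 v) - pib e by rewrite /al; ring.
rewrite cos_pibB.
have := @sign_sq false (sgb e * cos (a - hh thz thw b1 b2 v)) 1; rewrite /sgb !mul1r; apply => //.
by rewrite expr1n exprMn fib_h2 mulr1; case: e {he}; rewrite /sgb ?expr1n // sqrrN expr1n.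
Qed.

Lemma fib_g e : 0 < sgb e * cos (a - hh thz thw b1 b2 v) -> eqv g (ga thz thw b1 b2 e v).
Proof.
move=> he.
have -> : ga thz thw b1 b2 e v = (Au thz b1 v - al thz thw b1 b2 e v) + 2 * pib e.
  by rewrite /ga /al /hh; field.
have -> : g = (a + g - a) + 0 by ring.
apply: eqvD; first by apply: eqvB; [exact: fib_u | exact: fib_a].
by have [h1 h2] := @cos_2pib R e; rewrite /eqv h1 h2 cos0 sin0.
Qed.

Lemma fib_lab : cos (a - hh thz thw b1 b2 v) != 0.
Proof. by apply/eqP => h; have := fib_h2; rewrite h expr0n /= => /eqP; rewrite eq_sym oner_eq0. Qed.

End Fib2.


Local Open Scope quotient_scope.

Section ContA.
Context {R : realType}.
Local Notation A2 := 'rV[R]_4.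
Implicit Types v : A2.

Lemma c0_cont : continuous (@c0 R). Proof. move=> v; exact: coord_continuous. Qed.
Lemma c1_cont : continuous (@c1 R). Proof. move=> v; exact: coord_continuous. Qed.
Lemma c2_cont : continuous (@c2 R). Proof. move=> v; exact: coord_continuous. Qed.
Lemma c3_cont : continuous (@c3 R). Proof. move=> v; exact: coord_continuous. Qed.

Lemma cX {X : topologicalType} (f : X -> R) x : {for x, continuous f} ->
  {for x, continuous (fun t => f t ^+ 2)}.
Proof. by move=> h; rewrite /GRing.exp /=; exact: (@cM R X f f x h h). Qed.

Lemma cargc {X : topologicalType} (th : R) (fx fy : X -> R) x :
  {for x, continuous fx} -> {for x, continuous fy} ->
  0 < cos th * fx x + sin th * fy x ->
  {for x, continuous (fun t => argc th (fx t) (fy t))}.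
Proof.
move=> hx hy hp; rewrite /argc.
apply: cD; first exact: cC.
apply: (@cComp R X (fun t => (cos th * fy t - sin th * fx t) / (cos th * fx t + sin th * fy t)) atan x); last exact: continuous_atan.
apply: cM.
  by apply: cB; apply: cM => //; apply: cC.
apply: cV; first by rewrite gt_eqF.
by apply: cD; apply: cM => //; apply: cC.
Qed.

Lemma rz_cont : continuous (@rz R).
Proof.
move=> v; apply: (@cComp R _ (fun v => c0 v ^+ 2 + c1 v ^+ 2)); last exact: sqrt_continuous.
by apply: cD; apply: cX; [exact: c0_cont | exact: c1_cont].
Qed.
Lemma rw_cont : continuous (@rw R).
Proof.
move=> v; apply: (@cComp R _ (fun v => c2 v ^+ 2 + c3 v ^+ 2)); last exact: sqrt_continuous.
by apply: cD; apply: cX; [exact: c2_cont | exact: c3_cont].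
Qed.

Lemma beta0_cont v : 0 < rz v -> {for v, continuous (@beta0 R)}.
Proof.
move=> h; apply: cargc; [exact: rz_cont | exact: rw_cont |].
by rewrite cos0 sin0 mul1r mul0r addr0.
Qed.

Lemma Az_cont th v : 0 < pz th v -> {for v, continuous (Az th)}.
Proof. by move=> h; apply: cargc => //; [exact: c0_cont | exact: c1_cont]. Qed.
Lemma Bw_cont th v : 0 < pw th v -> {for v, continuous (Bw th)}.
Proof. by move=> h; apply: cargc => //; [exact: c3_cont | apply: cN; exact: c2_cont]. Qed.

Variables (thz thw : R) (b1 b2 e : bool).
Lemma bet_cont v : 0 < rz v -> {for v, continuous (@bet R b1 b2)}.
Proof.
move=> h; rewrite /bet; apply: cD; first exact: cC.
by apply: cM; [exact: cC | exact: beta0_cont].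
Qed.

Lemma hh_cont v : 0 < pz thz v -> 0 < pw thw v -> {for v, continuous (hh thz thw b1 b2)}.
Proof.
move=> h1 h2; rewrite /hh; apply: cM; last exact: cC.
by rewrite /Au /Bu; apply: cD; apply: cD; try exact: cC; [exact: Az_cont | exact: Bw_cont].
Qed.

Lemma al_cont v : 0 < pz thz v -> 0 < pw thw v -> {for v, continuous (al thz thw b1 b2 e)}.
Proof. by move=> h1 h2; rewrite /al; apply: cD; [exact: hh_cont | exact: cC]. Qed.

Lemma ga_cont v : 0 < pz thz v -> 0 < pw thw v -> {for v, continuous (ga thz thw b1 b2 e)}.
Proof.
move=> h1 h2; rewrite /ga; apply: cD; last exact: cC.
apply: cM; last exact: cC.
by rewrite /Au /Bu; apply: cB; apply: cD; try exact: cC; [exact: Az_cont | exact: Bw_cont].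
Qed.

Lemma pz_cont (th : R) v : {for v, continuous (pz th)}.
Proof. by rewrite /pz; apply: cD; apply: cM; try exact: cC; [exact: c0_cont | exact: c1_cont]. Qed.
Lemma pw_cont (th : R) v : {for v, continuous (pw th)}.
Proof. by rewrite /pw; apply: cD; apply: cM; try exact: cC; [exact: c3_cont | apply: cN; exact: c2_cont]. Qed.

End ContA.


Local Open Scope quotient_scope.

Lemma open_near {X : topologicalType} (P : set X) : (forall x, P x -> nbhs x P) -> open P.
Proof. by move=> h; rewrite openE => x Px; exact: h. Qed.

Lemma near_pos {R : realType} {X : topologicalType} {f : X -> R} {x} :
  {for x, continuous f} -> 0 < f x -> nbhs x [set y | 0 < f y].
Proof.
move=> hf hp; have H : nbhs (f x) [set y : R | 0 < y].
  by apply: open_nbhs_nbhs; split => //; exact: open_gt.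
exact: (hf _ H).
Qed.

Lemma cpair {X Y Z : topologicalType} (f : X -> Y) (g : X -> Z) x :
  {for x, continuous f} -> {for x, continuous g} -> {for x, continuous (fun t => (f t, g t))}.
Proof. move=> hf hg. exact: cvg_pair. Qed.

Section Cover.
Context {R : realType}.
Local Notation pi := (@pi R).
Local Notation piC := (\pi_(circle R)).
Local Notation A2 := 'rV[R]_4.
Local Notation PhiF := (@PhiFm R).
Local Notation TR := (set_type (@torus_reg R)).
Local Notation TG := (set_type (@target R)).
Local Notation Phi_reg := (@Phi_reg R).
Local Notation ca := (@ca R).
Local Notation sa := (@sa R).
Local Notation cb := (@cb R).
Local Notation sb := (@sb R).
Local Notation cg := (@cg R).
Local Notation sg := (@sg R).

Lemma PhiF_eqv {a b g a' b' g' : R} : eqv a a' -> eqv b b' -> eqv g g' -> PhiF a b g = PhiF a' b' g'.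
Proof.
move=> ha hb hg; have [c1 s1] := eqvD ha hg; have [c2 s2] := eqvB ha hg.
by case: hb => cb sb; rewrite /PhiFm c1 s1 c2 s2 cb sb.
Qed.

Lemma eqv_ang (x : R) : eqv (ang (piC x)) x.
Proof. by split; [exact: cos_ang | exact: sin_ang]. Qed.

Lemma piC_eqv (x y : R) : eqv x y -> piC x = piC y.
Proof. by case; exact: piC_eq. Qed.

Definition bi1 (i : 'I_8) := odd (i./2).
Definition bi2 (i : 'I_8) := odd (i./2./2).
Definition bie (i : 'I_8) := odd i.

Lemma bits_inj {i j : 'I_8} : bi1 i = bi1 j -> bi2 i = bi2 j -> bie i = bie j -> i = j.
Proof.
rewrite /bi1 /bi2 /bie.
case: i => [[|[|[|[|[|[|[|[|?]]]]]]]] hi] //; case: j => [[|[|[|[|[|[|[|[|?]]]]]]]] hj] //=;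
  by move=> *; apply: val_inj.
Qed.

Lemma bits_ex (b1 b2 e : bool) : exists i : 'I_8, [/\ bi1 i = b1, bi2 i = b2 & bie i = e].
Proof.
exists (inord (e + 2 * b1 + 4 * b2)); rewrite /bi1 /bi2 /bie inordK;
  by case: b1; case: b2; case: e.
Qed.

Lemma sgb_uniq {b b' : bool} {c : R} : 0 < sgb b * c -> 0 < sgb b' * c -> b = b'.
Proof. by case: b; case: b'; rewrite /sgb // ?mul1r ?mulN1r => h1 h2; lra. Qed.

Lemma sgb_pos {c : R} : c != 0 -> 0 < sgb (c < 0) * c.
Proof.
move=> hc; case: (ltrP c 0) => h; rewrite /sgb ?mulN1r ?mul1r; first lra.
by rewrite lt_def hc.
Qed.

Lemma sgb_neq0 b : sgb b != 0 :> R.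
Proof. by case: b; rewrite /sgb ?oppr_eq0 oner_eq0. Qed.

Variables (thz thw : R).

Definition sec_pt (i : 'I_8) (v : A2) : torus3 R :=
  (piC (al thz thw (bi1 i) (bi2 i) (bie i) v), piC (bet (bi1 i) (bi2 i) v),
   piC (ga thz thw (bi1 i) (bi2 i) (bie i) v)).

Lemma sec_reg i (q : TG) : torus_reg (sec_pt i (\val q)).
Proof.
have tq : target (\val q) := set_valP q.
rewrite /torus_reg /= sin2 sin_ang cos_ang.
have [hc hs] := bet_cs (bi1 i) (bi2 i) tq; have [r1 r2 _] := target_facts _ tq.
rewrite hs hc; by rewrite !mulf_neq0 ?sgb_neq0 ?gt_eqF ?pnatr_eq0.
Qed.

Definition sec i (q : TG) : TR := @exist _ _ (sec_pt i (\val q)) (mem_set (sec_reg i q)).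

Definition Ucov : set TG := [set q | 0 < pz thz (\val q) /\ 0 < pw thw (\val q)].

Definition hfun i (x : TR) : R := hh thz thw (bi1 i) (bi2 i) (\val (Phi_reg x)).

Definition Vcov (i : 'I_8) : set TR :=
  [set x | Ucov (Phi_reg x) /\ 0 < sgb (bi1 i) * cb (\val x) /\ 0 < sgb (bi2 i) * sb (\val x) /\
     0 < sgb (bie i) * (ca (\val x) * cos (hfun i x) + sa (\val x) * sin (hfun i x))].

Lemma val_cont {T : topologicalType} {A : set T} (x : set_type A) : {for x, continuous (fun y : set_type A => \val y)}.
Proof. exact: initial_continuous. Qed.

Lemma Ucov_open : open Ucov.
Proof.
apply: open_near => q [h1 h2].
have N1 := near_pos (continuous_comp (val_cont q) (pz_cont thz _)) h1.
have N2 := near_pos (continuous_comp (val_cont q) (pw_cont thw _)) h2.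
by apply: filterS (filterI N1 N2) => y [].
Qed.


Lemma tgt (q : TG) : target (\val q).
Proof. exact: set_valP q. Qed.

Lemma Phi_sec i q : Ucov q -> Phi_reg (sec i q) = q.
Proof.
move=> [hz hw]; apply: val_inj; rewrite /= Phi_closed /=.
rewrite (PhiF_eqv (eqv_ang _) (eqv_ang _) (eqv_ang _)).
exact: sec_PhiF (tgt q) hz hw.
Qed.

Lemma sec_V i q : Ucov q -> Vcov i (sec i q).
Proof.
move=> hU; have [hz hw] := hU; have tq := tgt q.
have [r1 r2 _] := target_facts _ tq.
have [hc hs] := bet_cs (bi1 i) (bi2 i) tq.
split; first by rewrite Phi_sec.
rewrite /cb /sb /ca /sa /hfun Phi_sec //= !cos_ang !sin_ang hc hs !mulrA !sgb2 !mul1r.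
split => //; split => //.
rewrite -cosB /al addrAC subrr add0r.
by case: (bie i); rewrite /pib /sgb ?cos0 ?cospi ?mulr1 ?mulrNN ?mulr1 ?ltr01.
Qed.

Lemma t_eta (t : torus3 R) : t = (piC (ang t.1.1), piC (ang t.1.2), piC (ang t.2)).
Proof. by rewrite !reprK; case: t => [[]]. Qed.

Lemma sec_Phi i x : Vcov i x -> sec i (Phi_reg x) = x.
Proof.
move=> [[hz hw] [s1 [s2 s3]]]; apply: val_inj => /=.
set t := \val x; set v := \val (Phi_reg x).
have hP : PhiF (ang t.1.1) (ang t.1.2) (ang t.2) = v by rewrite /v /= Phi_closed.
have tv : target v := tgt (Phi_reg x).
have he : 0 < sgb (bie i) * cos (ang t.1.1 - hh thz thw (bi1 i) (bi2 i) v).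
  by rewrite cosB.
rewrite [RHS]t_eta /sec_pt; congr (_, _, _); apply: piC_eqv; apply: eqv_sym.
- by have := @fib_a _ thz thw (bi1 i) (bi2 i) _ _ _ _ hP tv hz hw s1 s2 (bie i) he.
- by have := @fib_b _ (bi1 i) (bi2 i) _ _ _ _ hP tv s1 s2.
- by have := @fib_g _ thz thw (bi1 i) (bi2 i) _ _ _ _ hP tv hz hw s1 s2 (bie i) he.
Qed.

Lemma Vcov_disj i j : i != j -> Vcov i `&` Vcov j = set0.
Proof.
move=> nij; apply/seteqP; split => // x [[_ [a1 [a2 a3]]] [_ [b1 [b2 b3]]]].
have e1 := sgb_uniq a1 b1; have e2 := sgb_uniq a2 b2.
move: b3; rewrite /hfun -e1 -e2 => b3.
have e3 := sgb_uniq a3 b3.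
by move: nij; rewrite (bits_inj e1 e2 e3) eqxx.
Qed.

Lemma reg_cs {t : torus3 R} : torus_reg t -> cb t != 0 /\ sb t != 0.
Proof.
move=> h0; have h : sin (2 * ang t.1.2) != 0 := h0.
rewrite sin2 in h; rewrite /cb /sb; split; apply: contra h => /eqP ->;
  by rewrite ?mul0r ?mulr0.
Qed.

Lemma Vcov_cover : Phi_reg @^-1` Ucov = \bigcup_i Vcov i.
Proof.
apply/seteqP; split => x; last by move=> [i _ []].
move=> hU; have [hz hw] := hU.
set t := \val x; set v := \val (Phi_reg x).
have [c0 s0] := reg_cs (set_valP x).
have s1 := sgb_pos c0; have s2 := sgb_pos s0.
have hP : PhiF (ang t.1.1) (ang t.1.2) (ang t.2) = v by rewrite /v /= Phi_closed.
have tv : target v := tgt (Phi_reg x).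
have hl := @fib_lab _ thz thw _ _ _ _ _ _ hP tv hz hw s1 s2.
have s3 := sgb_pos hl.
have [i [i1 i2 i3]] := bits_ex (cb t < 0) (sb t < 0)
  (cos (ang t.1.1 - hh thz thw (cb t < 0) (sb t < 0) v) < 0).
exists i => //; split => //; rewrite /hfun i1 i2 i3 -/v -/t; split => //; split => //.
by rewrite -cosB.
Qed.

Lemma Vcov_open i : open (Vcov i).
Proof.
apply: open_near => x hx; have [hU [s1 [s2 s3]]] := hx; have [hz hw] := hU.
have N0 : nbhs x (Phi_reg @^-1` Ucov).
  apply: (@Phi_reg_cont R x); apply: open_nbhs_nbhs; split => //; exact: Ucov_open.
have cv : {for x, continuous (fun y : TR => \val (Phi_reg y))}.
  exact: (continuous_comp (@Phi_reg_cont R x) (val_cont _)).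
have ch : {for x, continuous (hfun i)}.
  exact: (continuous_comp cv (hh_cont thz thw (bi1 i) (bi2 i) _ hz hw)).
have N1 : nbhs x [set y : TR | 0 < sgb (bi1 i) * cb (\val y)].
  apply: (@near_pos R _ (fun y : TR => sgb (bi1 i) * cb (\val y)) x _ s1); apply: cM; first exact: cC.
  exact: (continuous_comp (val_cont x) (@cb_cont R _)).
have N2 : nbhs x [set y : TR | 0 < sgb (bi2 i) * sb (\val y)].
  apply: (@near_pos R _ (fun y : TR => sgb (bi2 i) * sb (\val y)) x _ s2); apply: cM; first exact: cC.
  exact: (continuous_comp (val_cont x) (@sb_cont R _)).
have N3 : nbhs x [set y : TR | 0 < sgb (bie i) * (ca (\val y) * cos (hfun i y) + sa (\val y) * sin (hfun i y))].
  apply: (@near_pos R _ (fun y : TR => sgb (bie i) * (ca (\val y) * cos (hfun i y) + sa (\val y) * sin (hfun i y))) x _ s3); apply: cM; first exact: cC.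
  apply: cD; apply: cM.
  - exact: (continuous_comp (val_cont x) (@ca_cont R _)).
  - exact: (@cComp R _ _ _ _ ch (@continuous_cos R _)).
  - exact: (continuous_comp (val_cont x) (@sa_cont R _)).
  - exact: (@cComp R _ _ _ _ ch (@continuous_sin R _)).
by apply: filterS (filterI N0 (filterI N1 (filterI N2 N3))) => y [? [? [? ?]]].
Qed.

Lemma sec_cont i : {within Ucov, continuous (sec i)}.
Proof.
rewrite continuous_open_subspace; last exact: Ucov_open.
move=> q /set_mem [hz hw]; apply: settype_cont_at => /=.
have [r1 _ _] := target_facts _ (tgt q).
have -> : (fun t : TG => set_val (sec i t)) = (fun t => sec_pt i (\val t)) by [].
rewrite /sec_pt; apply: cpair; first apply: cpair.
- apply: (continuous_comp _ (@pi_continuous _ _ _)).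
  exact: (continuous_comp (val_cont q) (al_cont thz thw _ _ _ _ hz hw)).
- apply: (continuous_comp _ (@pi_continuous _ _ _)).
  exact: (continuous_comp (val_cont q) (bet_cont _ _ _ r1)).
- apply: (continuous_comp _ (@pi_continuous _ _ _)).
  exact: (continuous_comp (val_cont q) (ga_cont thz thw _ _ _ _ hz hw)).
Qed.

End Cover.


Theorem proposition4p6 (R : realType) :
  exists Phi_reg : set_type (@torus_reg R) -> set_type (@target R),
    (forall t : set_type (@torus_reg R), \val (Phi_reg t) = Phi (\val t)) /\
    n_fold_covering 8 Phi_reg.
Proof.
exists (@Phi_reg R); split; first exact: Phi_regE.
split; first exact: Phi_reg_cont.
move=> q.
have tq := tgt q; have [r1 r2 _] := target_facts _ tq.
have [thz hz] : exists th : R, 0 < cos th * c0 (\val q) + sin th * c1 (\val q).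
  apply: exists_chart => -[h0 h1]; move: r1.
  by rewrite /rz h0 h1 expr0n /= addr0 sqrtr0 ltxx.
have [thw hw] : exists th : R, 0 < cos th * c3 (\val q) + sin th * (- c2 (\val q)).
  apply: exists_chart => -[h3 h2]; move: r2.
  have h2' : c2 (\val q) = 0 by rewrite -[c2 _]opprK h2 oppr0.
  by rewrite /rw h2' h3 expr0n /= addr0 sqrtr0 ltxx.
exists (Ucov thz thw); split; first exact: Ucov_open.
split; first by split.
exists (Vcov thz thw); split; first exact: Vcov_open.
split; first exact: Vcov_disj.
split; first exact: Vcov_cover.
move=> i; exists (sec thz thw i); split; first exact: sec_cont.
split; last exact: sec_Phi.
by move=> y hy; split; [exact: sec_V | exact: Phi_sec].
Qed.
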